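(* Let $r<0$ be an integer and let $f(x)=\sum_{i=0}^{-r}\gamma_ix^i\in\mathbb{K}[x]$. Then $$\sum_{i=0}^m\binom{m}{i}\binom{1-r}{m+i}^{-1}\gamma_{m+i-1}=0\quad\text{for all }1\le m\le\lceil -r/2\rceil$$ if and only if there exist $\delta_0,\dots,\delta_{\lfloor -r/2\rfloor}\in\mathbb{K}$ with $$f(x)=(x-2)^{-r}\sum_{i=0}^{\lfloor -r/2\rfloor}\delta_i\left(\frac{x}{x-2}\right)^{2i}=\sum_{i=0}^{\lfloor -r/2\rfloor}\delta_i\,x^{2i}(x-2)^{-r-2i}.$$
   Context: $\mathbb{K}\in\{\mathbb{Q},\mathbb{R},\mathbb{C}\}$. *)

(* Defs.v *)
From HB Require Import structures.
From mathcomp Require Import all_boot all_order all_algebra.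
Set Implicit Arguments.
Unset Strict Implicit.
Unset Printing Implicit Defensive.

(* Main.v *)
Require Import Defs.
From HB Require Import structures.
From mathcomp Require Import all_boot all_order all_algebra.
From mathcomp Require Import ring zify.
Import Order.TTheory GRing.Theory Num.Theory.
Set Implicit Arguments. Unset Strict Implicit. Unset Printing Implicit Defensive.
Local Open Scope ring_scope.

Lemma coef_XaddCn (R : comNzRingType) (a : R) N k :
  (('X + a%:P)^+N)`_k = 'C(N,k)%:R * a^+(N-k).
Proof.
elim: N k => [|N IH] k.
  by rewrite expr0 coef1; case: k => [|k]; rewrite ?bin0 ?expr0 ?mulr1 // bin0n mul0r.
rewrite exprSr mulrDr coefD coefMX coefMC.
case: k => [|k] /=; rewrite !IH.
  by rewrite !bin0 !subn0 exprS add0r !mul1r mulrC.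
rewrite binS natrD mulrDl subSS addrC; congr (_ + _).
case: (leqP k.+1 N) => hk.
  rewrite -mulrA -exprSr; congr (_ * _); congr (_ ^+ _); lia.
by rewrite bin_small // !mul0r.
Qed.

Section S.
Variable K : numFieldType.

Definition Bp (n k : nat) : {poly K} := 'X^k * ('X - 2%:P)^+(n-k).

Lemma coef_B n k j : (Bp n k)`_j =
  if (j < k)%N then 0 else 'C(n-k, j-k)%:R * (-2)^+(n-k-(j-k)).
Proof. by rewrite /Bp coefXnM -polyCN coef_XaddCn. Qed.

Definition cond n m (f : {poly K}) := \sum_(i < m.+1)
  ('C(m, i)%:R * ('C(n.+1, m + i)%:R)^-1 * f`_(m + i - 1)).

Definition Rm m : {poly K} := \sum_(i < m.+1)
  ('C(m,i) * (m+i))%:R *: ('X + (- 2^-1)%:P)^+(m+i-1).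

Lemma coef_Rm m k : (Rm m)`_k = \sum_(i<m.+1)
  ('C(m,i)*(m+i))%:R * ('C(m+i-1,k)%:R * (-2^-1)^+(m+i-1-k)).
Proof. by rewrite /Rm coef_sum; apply: eq_bigr => i _; rewrite coefZ coef_XaddCn. Qed.

Lemma natid n j k : (k <= j)%N -> (j <= n)%N ->
  (n.+1 * ('C(n,k) * 'C(n-k,j-k)) = j.+1 * ('C(j,k) * 'C(n.+1,j.+1)))%N.
Proof.
move=> hkj hjn.
have -> : (j.+1 * ('C(j,k) * 'C(n.+1,j.+1)) = 'C(j,k) * (j.+1 * 'C(n.+1,j.+1)))%N by ring.
rewrite -mul_bin_diag /=.
suff -> : ('C(n,k) * 'C(n-k,j-k) = 'C(n,j) * 'C(j,k))%N by ring.
have h1 := bin_fact (leq_trans hkj hjn).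
have h2 : (j - k <= n - k)%N by lia.
have {h2} h2 := bin_fact h2.
have h3 := bin_fact hkj.
have h4 := bin_fact hjn.
rewrite (_ : (n-k-(j-k) = n-j)%N) in h2; last by lia.
apply/eqP; rewrite -(@eqn_pmul2r (k`! * ((j-k)`! * (n-j)`!))); last first.
  by rewrite !muln_gt0 !fact_gt0.
have L : ('C(n,k) * 'C(n-k,j-k) * (k`! * ((j-k)`! * (n-j)`!)) = n`!)%N.
  by rewrite -h1 -h2; ring.
have Rr : ('C(n,j) * 'C(j,k) * (k`! * ((j-k)`! * (n-j)`!)) = n`!)%N.
  by rewrite -h4 -h3; ring.
by rewrite L Rr.
Qed.

Lemma natr_neq0 n : (n != 0)%N -> (n%:R : K) != 0.
Proof. by rewrite pnatr_eq0. Qed.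

Lemma cond_B n m k : (1 <= m)%N -> (2 * m <= n.+1)%N -> (k <= n)%N ->
  cond n m (Bp n k) = (-2)^+(n-k) / (n.+1%:R * 'C(n,k)%:R) * (Rm m)`_k.
Proof.
move=> h1 h2 hk.
rewrite /cond coef_Rm mulr_sumr; apply: eq_bigr => -[i hi] _ /=.
rewrite coef_B.
have [j ej] : exists j, (m + i = j.+1)%N by exists (m+i-1)%N; lia.
have hj : (j <= n)%N by lia.
rewrite ej subSS subn0.
case: ltnP => hjk.
  by rewrite (bin_small hjk) !(mul0r, mulr0).
have -> : (-2 : K)^+(n-k) = (-2)^+(n-k-(j-k)) * (-2)^+(j-k).
  by rewrite -exprD; congr (_ ^+ _); lia.
have n1 : (n.+1%:R : K) != 0 by apply: natr_neq0.
have n2 : ('C(n,k)%:R : K) != 0 by apply: natr_neq0; rewrite -lt0n bin_gt0; lia.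
have n3 : ('C(n.+1,j.+1)%:R : K) != 0 by apply: natr_neq0; rewrite -lt0n bin_gt0; lia.
have n4 : ((-2 : K)^+(j-k)) != 0 by rewrite expf_neq0 // oppr_eq0 pnatr_eq0.
have H := natid hjk hj.
move/(congr1 (fun x => x%:R : K)): H; rewrite !natrM => H.
have -> : ('C(n-k,j-k)%:R : K) = (n.+1%:R * ('C(n,k)%:R * 'C(n-k,j-k)%:R)) /
   (n.+1%:R * 'C(n,k)%:R).
  by field; rewrite n2 addrC natr1.
rewrite H -invrN exprVn.
field.
by rewrite n4 n2 n3 addrC natr1 n1.
Qed.


Lemma Rm_high m k : (1 <= m)%N -> (2 * m <= k)%N -> (Rm m)`_k = 0.
Proof.
move=> h1 h2; rewrite coef_Rm big1 // => -[i hi] _ /=.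
by rewrite (@bin_small (m+i-1) k) ?(mul0r, mulr0) //; lia.
Qed.

Lemma Rm_top m : (1 <= m)%N -> (Rm m)`_(2 * m - 1) = (2 * m)%:R.
Proof.
move=> h1; rewrite coef_Rm (bigD1 ord_max) //= big1 ?addr0.
  rewrite (_ : (m + m - 1 = 2 * m - 1)%N); last by lia.
  by rewrite binn subnn expr0 binn mulr1 mulr1 mul1n; congr _%:R; lia.
move=> -[i hi] /= hne.
have hi' : i != m.
  by apply: contraNneq hne => eim; apply/eqP; apply: val_inj; rewrite /= eim.
by rewrite (@bin_small (m+i-1)) ?(mul0r, mulr0) //; lia.
Qed.

Lemma odd_coef_X2 (d : K) m k : odd k -> ((('X^2 - d%:P)^+m)`_k) = 0.
Proof.
elim: m k => [|m IH] k hk.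
  by rewrite expr0 coef1; case: k hk.
rewrite exprS mulrBl coefB coefXnM coefCM (IH k hk) mulr0 subr0.
case: ltnP => // h2; apply: IH.
move: hk h2; case: k => [|[|k]] //= hk _; rewrite negbK in hk; rewrite (_ : (k.+2 - 2 = k)%N) //; lia.
Qed.

Lemma Rm_eq m : Rm m = (('X^2 - (4^-1)%:P)^+m)^`().
Proof.
set c := (2^-1 : K).
have n2 : (2 : K) != 0 by rewrite pnatr_eq0.
have hc : c + c = 1 by rewrite /c; field.
have h4 : (4^-1 : K) = c * c by rewrite /c; field.
have -> : 'X^2 - (4^-1)%:P = ('X + (- c)%:P) * (('X + (-c)%:P) + 1 :> {poly K}).
  by rewrite h4 -polyC1 -hc !polyCD polyCN polyCM; ring.
rewrite exprMn exprD1n mulr_sumr raddf_sum /Rm; apply: eq_bigr => i _.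
rewrite /c; rewrite -[X in _ = X]/(deriv _).
rewrite mulrnAr -exprD derivMn deriv_exp derivD derivX derivC addr0 mul1r.
by rewrite natrM -scalerA !scaler_nat subn1.
Qed.

Lemma Rm_even m k : ~~ odd k -> (Rm m)`_k = 0.
Proof. by move=> hk; rewrite Rm_eq coef_deriv odd_coef_X2 ?mul0rn //= hk. Qed.


Lemma decomp n (f : {poly K}) : (size f <= n.+1)%N ->
  exists a : nat -> K, f = \sum_(j < n.+1) a j *: Bp n j.
Proof.
elim: n f => [|n IH] f hf.
  exists (fun _ => f`_0); rewrite big_ord1 /Bp subnn !expr0 mulr1 alg_polyC.
  exact: size1_polyC.
set c := f.[0] / (-2)^+(n.+1).
set g := f - c *: ('X - 2%:P)^+n.+1.
have n2 : ((-2 : K)^+(n.+1)) != 0 by rewrite expf_neq0 // oppr_eq0 pnatr_eq0.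
have g0 : root g 0.
  by rewrite /root /g hornerD hornerN hornerZ horner_exp hornerXsubC sub0r /c mulfVK // subrr.
case/factor_theorem: g0 => q eq; rewrite polyC0 subr0 in eq.
have hq : (size q <= n.+1)%N.
  case: (eqVneq q 0) => [->|qn0]; first by rewrite size_poly0.
  rewrite -ltnS -(size_mulX qn0) -eq /g.
  apply: leq_trans (size_add _ _) _; rewrite size_opp geq_max hf /=.
  by apply: leq_trans (size_scale_leq _ _) _; rewrite size_exp_XsubC.
have [a ha] := IH q hq.
exists (fun j => if j is j'.+1 then a j' else c).
have ef : f = c *: ('X - 2%:P)^+n.+1 + q * 'X by rewrite -eq /g addrC subrK.
rewrite {1}ef ha mulr_suml [in RHS]big_ord_recl /= /Bp expr0 mul1r subn0; congr (_ + _).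
apply: eq_bigr => j _ /=.
by rewrite /bump /= add1n add0n subSS -scalerAl exprSr mulrAC.
Qed.

Lemma cond_sum n m N (c : 'I_N -> K) (p : 'I_N -> {poly K}) :
  cond n m (\sum_(j < N) c j *: p j) = \sum_(j < N) c j * cond n m (p j).
Proof.
rewrite /cond; under eq_bigr => i _ do rewrite coef_sum mulr_sumr.
rewrite exchange_big; apply: eq_bigr => j _ /=; rewrite mulr_sumr.
by apply: eq_bigr => i _; rewrite coefZ mulrCA.
Qed.

End S.

Lemma sum_even (V : zmodType) (F : nat -> V) n : (forall j, (j <= n)%N -> odd j -> F j = 0) ->
  \sum_(j < n.+1) F j = \sum_(i < n./2.+1) F (2 * i)%N.
Proof.
elim: n => [|n IH] hF; first by rewrite !big_ord1.
rewrite big_ord_recr /= IH; last by move=> j hj; apply: hF; lia.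
have hd := odd_double_half n.
case hn: (odd n); rewrite hn /= in hd.
  have -> : (uphalf n = (n./2).+1)%N by lia.
  by rewrite [in RHS]big_ord_recr /=; congr (_ + F _); lia.
have -> : (uphalf n = n./2)%N by lia.
by rewrite hF ?addr0 //= hn.
Qed.

Lemma main_n (K : numFieldType) (n : nat) (f : {poly K}) (hf : (size f <= n.+1)%N) :
  (forall m : nat, (1 <= m)%N -> (m <= uphalf n)%N ->
     \sum_(i < m.+1)
        ('C(m, i)%:R * ('C(n.+1, m + i)%:R)^-1 * f`_(m + i - 1)) = 0)
  <->
  (exists delta : 'I_(n./2).+1 -> K,
     f = \sum_(i < (n./2).+1)
           delta i *: ('X ^+ (2 * i) * ('X - 2%:P) ^+ (n - 2 * i))).
Proof.
split.
  move=> hc; have [a ha] := decomp hf.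
  have hodd : forall l, (2 * l + 1 <= n)%N -> a (2 * l + 1)%N = 0.
    elim/ltn_ind => l IHl hl.
    have : cond n l.+1 f = 0 by apply: hc; lia.
    have hl' : (2 * l + 1 < n.+1)%N by lia.
    rewrite ha cond_sum (bigD1 (Ordinal hl')) //= big1 ?addr0.
      rewrite cond_B; try lia.
      rewrite (_ : (2 * l + 1 = 2 * l.+1 - 1)%N); last by lia.
      rewrite Rm_top //.
      have nz : (-2 : K) ^+ (n - (2 * l.+1 - 1)) / (n.+1%:R * 'C(n, 2 * l.+1 - 1)%:R) *
         (2 * l.+1)%:R != 0.
        rewrite !mulf_neq0 ?invr_eq0 ?mulf_neq0 ?expf_neq0 ?oppr_eq0 ?pnatr_eq0 //.
        by rewrite -lt0n bin_gt0; lia.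
      by move/eqP; rewrite mulf_eq0 (negbTE nz) orbF => /eqP.
    move=> [j hj] /= hne.
    have hne' : j != (2 * l + 1)%N.
      by apply: contraNneq hne => e; apply/eqP; apply: val_inj; rewrite /= e.
    rewrite cond_B; try lia.
    case: (boolP (odd j)) => oj; last by rewrite Rm_even // !mulr0.
    have hd := odd_double_half j; rewrite oj /= in hd.
    case: (ltnP j (2 * l + 1)) => hjl.
      have -> : j = (2 * j./2 + 1)%N by lia.
      by rewrite IHl ?mul0r //; lia.
    by rewrite Rm_high ?mulr0 //; lia.
  exists (fun i => a (2 * i)%N).
  rewrite ha (sum_even (F := fun j => a j *: Bp _ n j)) //.
  move=> j hj oj; have hd := odd_double_half j; rewrite oj /= in hd.
  by rewrite (_ : j = (2 * j./2 + 1)%N) ?hodd ?scale0r //; lia.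
move=> [delta ->] m h1 h2.
rewrite -/(cond n m _) cond_sum big1 // => i _.
rewrite -/(Bp _ n (2 * i)) cond_B; try lia.
  by rewrite Rm_even ?mulr0 // oddM.
by case: i => i hi /=; lia.
Qed.

Theorem proposition4p9 (K : numFieldType) (r : int) (hr : r < 0)
  (f : {poly K}) (hf : (size f <= `|r|.+1)%N) :
  (forall m : nat, (1 <= m)%N -> (m <= uphalf `|r|)%N ->
     \sum_(i < m.+1)
        ('C(m, i)%:R * ('C(`|r|.+1, m + i)%:R)^-1 * f`_(m + i - 1)) = 0)
  <->
  (exists delta : 'I_(`|r|./2).+1 -> K,
     f = \sum_(i < (`|r|./2).+1)
           delta i *: ('X ^+ (2 * i) * ('X - 2%:P) ^+ (`|r| - 2 * i))).
Proof. exact: main_n. Qed.
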